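(* Let $d,m$ be positive integers with $d\mid m$. Then $P(d,n)$ divides $P(m,n)$ for every positive integer $n$.
   Context: For positive integers $m,n$, let $\mathbf{Z}_m$ be the integers modulo $m$ and $T:\mathbf{Z}_m^n\to\mathbf{Z}_m^n$, $T(a_0,\dots,a_{n-1})=(a_0+a_1,a_1+a_2,\dots,a_{n-1}+a_0)$. For $\mathbf{a}\in\mathbf{Z}_m^n$ the cycle length of $(T^k\mathbf{a})_{k\ge0}$ is the smallest positive integer $P$ such that there is $N$ with $T^{k+P}\mathbf{a}=T^k\mathbf{a}$ for all $k\ge N$. $P(m,n)$ denotes the maximum of these cycle lengths over all $\mathbf{a}\in\mathbf{Z}_m^n$. *)

(* Defs.v *)
From mathcomp Require Import all_boot.
Unset Printing Implicit Defensive.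

(* Elements of Z_m^n are represented by their canonical representatives:
   finite functions a : 'I_n -> nat with every entry < m. *)
Definition vec (n : nat) := {ffun 'I_n -> nat}.

Definition in_Zmn (m : nat) {n : nat} (a : vec n) : Prop := forall i : 'I_n, a i < m.

Definition Tmap (m : nat) {n : nat} (a : vec n) : vec n :=
  [ffun i : 'I_n => (a i + a (ordS i)) %% m].

Definition is_eventual_period (m n : nat) (a : vec n) (P : nat) : Prop :=
  0 < P /\ exists N, forall k, N <= k ->
    iter (k + P) (@Tmap m n) a = iter k (@Tmap m n) a.

Definition is_cycle_length (m n : nat) (a : vec n) (P : nat) : Prop :=
  is_eventual_period m n a P /\
  forall Q, is_eventual_period m n a Q -> P <= Q.

Definition is_Pmax (m n p : nat) : Prop :=
  (exists2 a : vec n, in_Zmn m a & is_cycle_length m n a p) /\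
  (forall (a : vec n) q, in_Zmn m a -> is_cycle_length m n a q -> q <= p).

(* Main.v *)
Require Import Defs.
From mathcomp Require Import all_boot.
From mathcomp Require Import zify.
From Stdlib Require Import Classical.

Lemma ord_pos n (i : 'I_n) : 0 < n.
Proof. exact: leq_ltn_trans (leq0n i) (ltn_ord i). Qed.

Definition Dix n (i j : 'I_n) : 'I_n :=
  Ordinal (ltn_pmod (i + (n - j)) (@ord_pos _ i)).

Arguments Dix {n}.

Definition evec (m n : nat) : vec n := [ffun x : 'I_n => (x == 0 :> nat) %% m].

Lemma Dix0 n (i j : 'I_n) : (val (Dix i j) == 0) = (i == j).
Proof.
rewrite /Dix /=.
have hi := ltn_ord i; have hj := ltn_ord j.
case: (leqP j i) => hji.
  have -> : i + (n - j) = n + (i - j) by lia.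
  rewrite modnDl modn_small; last by lia.
  apply/idP/idP => [/eqP h|/eqP h]; last by rewrite h subnn.
  apply/eqP; apply: val_inj => /=; lia.
rewrite modn_small; last by lia.
apply/idP/idP => [/eqP h|/eqP h]; first by lia.
by move: hji; rewrite h ltnn.
Qed.

Lemma DixS n (i j : 'I_n) : ordS (Dix i j) = Dix (ordS i) j.
Proof.
apply: val_inj => /=.
by rewrite -addn1 modnDml modnDml; congr (_ %% _); lia.
Qed.

Lemma sum_modr n m (f g : 'I_n -> nat) :
  (\sum_(j < n) f j * (g j %% m)) = (\sum_(j < n) f j * g j) %[mod m].
Proof.
apply: (big_ind2 (fun x y => x = y %[mod m])) => //.
  by move=> x1 x2 y1 y2 h1 h2; rewrite -modnDm h1 h2 modnDm.
by move=> j _; rewrite modnMmr.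
Qed.

Lemma conv m n (a : vec n) : 0 < m -> in_Zmn m a -> forall k i,
  iter k (@Tmap m n) a i =
  (\sum_(j < n) a j * iter k (@Tmap m n) (evec m n) (Dix i j)) %% m.
Proof.
move=> hm ha; elim=> [|k IH] i /=.
  rewrite (bigD1 i) //= big1 => [|j hj]; last first.
    by rewrite /evec ffunE Dix0 eq_sym (negbTE hj) mod0n muln0.
  rewrite /evec ffunE Dix0 eqxx addn0 modnMmr muln1 modn_small //.
rewrite /Tmap ffunE.
under eq_bigr do rewrite ffunE DixS.
rewrite !IH modnDm sum_modr -big_split /=.
by congr (_ %% _); apply: eq_bigr => j _; rewrite mulnDr.
Qed.

Lemma transfer m n (a : vec n) P : 0 < m -> in_Zmn m a ->
  is_eventual_period m n (evec m n) P -> is_eventual_period m n a P.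
Proof.
move=> hm ha [hP [N hN]]; split => //; exists N => k hk.
apply/ffunP => i; rewrite !(@conv m n a hm ha).
by rewrite hN.
Qed.

Lemma iter_mul m n (a : vec n) c N : (forall k, N <= k ->
    iter (k + c) (@Tmap m n) a = iter k (@Tmap m n) a) ->
  forall t k, N <= k -> iter (k + t * c) (@Tmap m n) a = iter k (@Tmap m n) a.
Proof.
move=> h; elim=> [|t IH] k hk; first by rewrite mul0n addn0.
rewrite mulSn addnCA addnC h; first exact: IH.
exact: leq_trans hk (leq_addr _ _).
Qed.

Lemma cycle_dvd m n (a : vec n) c Q :
  is_cycle_length m n a c -> is_eventual_period m n a Q -> c %| Q.
Proof.
move=> [[hc [N1 h1]] hmin] [hQ [N2 h2]].
case hr: (Q %% c) => [|r]; first by apply/dvdnP; exists (Q %/ c); rewrite {1}(divn_eq Q c) hr addn0.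
have : c <= r.+1.
  apply: hmin; split => //; exists (maxn N1 N2) => k hk.
  rewrite -(@iter_mul m n a c N1 h1 (Q %/ c) (k + r.+1)); last by lia.
  rewrite -addnA [r.+1 + _]addnC -hr -divn_eq h2 //; lia.
by rewrite -hr leqNgt ltn_pmod.
Qed.

Lemma iter_in m n (a : vec n) k : 0 < m -> in_Zmn m a -> in_Zmn m (iter k (@Tmap m n) a).
Proof.
move=> hm ha; case: k => [|k] //= i; rewrite /Tmap ffunE; exact: ltn_pmod.
Qed.

Lemma evec_in m n : 0 < m -> in_Zmn m (evec m n).
Proof. by move=> hm i; rewrite ffunE ltn_pmod. Qed.

Definition red d n (a : vec n) : vec n := [ffun i => a i %% d].
Arguments red d {n}.

Lemma red_iter d m n (a : vec n) k : d %| m ->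
  iter k (@Tmap d n) (red d a) = red d (iter k (@Tmap m n) a).
Proof.
move=> hdm; elim: k => [|k IH] //=; rewrite IH; apply/ffunP => i.
by rewrite /Tmap /red !ffunE modnDm modn_dvdm.
Qed.

Lemma red_evec d m n : d %| m -> red d (evec m n) = evec d n.
Proof. by move=> hdm; apply/ffunP => i; rewrite !ffunE modn_dvdm. Qed.

Lemma red_period d m n (a : vec n) P : d %| m ->
  is_eventual_period m n a P -> is_eventual_period d n (red d a) P.
Proof.
move=> hdm [hP [N hN]]; split => //; exists N => k hk.
by rewrite !(@red_iter d m n a _ hdm) hN.
Qed.

Lemma exists_period m n (a : vec n) : 0 < m -> in_Zmn m a ->
  exists P, is_eventual_period m n a P.
Proof.
case: m => [//|m'] _ ha.
pose V := {ffun 'I_n -> 'I_m'.+1}.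
pose g (k : 'I_(#|V|.+1)) : V := [ffun i => inord (iter k (@Tmap m'.+1 n) a i)].
have [k1 [k2 [hne heq]]] : exists k1 k2 : 'I_(#|V|.+1), k1 != k2 /\ g k1 = g k2.
  case: (boolP [exists k1, exists k2, (k1 != k2) && (g k1 == g k2)]).
    move=> /existsP [k1 /existsP [k2 /andP [h1 /eqP h2]]]; by exists k1, k2.
  move=> /negP hn; exfalso.
  have ginj : injective g.
    move=> x y hxy; apply/eqP; apply/negPn/negP => hxy'; apply: hn.
    by apply/existsP; exists x; apply/existsP; exists y; rewrite hxy' hxy eqxx.
  by have := leq_card g ginj; rewrite card_ord ltnn.
have eqit : iter k1 (@Tmap m'.+1 n) a = iter k2 (@Tmap m'.+1 n) a.
  apply/ffunP => i; have := congr1 (fun f : V => val (f i)) heq.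
  by rewrite /g /= !ffunE !inordK //; apply: iter_in.
have key : forall x y, x < y -> iter x (@Tmap m'.+1 n) a = iter y (@Tmap m'.+1 n) a ->
    exists P, is_eventual_period m'.+1 n a P.
  move=> x y hxy he; exists (y - x); split; first by rewrite subn_gt0.
  exists x => k hk.
  have -> : k + (y - x) = (k - x) + y by lia.
  by rewrite iterD -he -iterD subnK.
case: (ltngtP k1 k2) => h.
- exact: key h eqit.
- exact: key h (esym eqit).
- by move: hne; rewrite (val_inj h) eqxx.
Qed.

Lemma exists_cycle m n (a : vec n) P :
  is_eventual_period m n a P -> exists c, is_cycle_length m n a c.
Proof.
move: P; elim/ltn_ind => P IH hP.
case: (classic (forall Q, is_eventual_period m n a Q -> P <= Q)) => h.
  by exists P; split.
have [Q hQ'] := not_all_ex_not _ _ h.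
have [hQ hPQ] := imply_to_and _ _ hQ'.
by apply: (IH Q) => //; rewrite ltnNge; apply/negP.
Qed.

Theorem proposition3p1 (d m n pd pm : nat) :
  0 < d -> 0 < m -> 0 < n -> d %| m ->
  is_Pmax d n pd -> is_Pmax m n pm -> pd %| pm.
Proof.
move=> hd hm hn hdm [[a1 ha1 cl1] _] [[a0 ha0 cl0] max0].
have [P hP] := @exists_period m n (evec m n) hm (@evec_in m n hm).
have [c hc] := @exists_cycle m n (evec m n) P hP.
have hcpm : c <= pm := max0 _ _ (@evec_in m n hm) hc.
have hdv : pm %| c := @cycle_dvd m n a0 pm c cl0 (@transfer m n a0 c hm ha0 hc.1).
have hc0 : 0 < c := hc.1.1.
have ec : c = pm.
  apply/eqP; rewrite eqn_leq hcpm /=; exact: dvdn_leq hc0 hdv.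
have hpe : is_eventual_period m n (evec m n) pm by rewrite -ec; exact: hc.1.
have := @red_period d m n _ _ hdm hpe; rewrite red_evec // => hpd.
exact: (@cycle_dvd d n a1 pd pm cl1 (@transfer d n a1 pm hd ha1 hpd)).
Qed.
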